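(* (i) Let $A_1 = \begin{pmatrix} \frac{\sqrt{2}}{2} & 0 \\ 0 & \frac{\sqrt{2}}{2} \end{pmatrix}$ and $B_1 = \begin{pmatrix} 0 & x \\ y & 0 \end{pmatrix}$, where $x,y\in\mathbb{C}$ satisfy $|x|,|y| \leq \frac{\sqrt{2}}{2}$ and are not both zero. Then there exist $p_1, p_2\in \mathbb{C} \setminus \{0\}$ satisfying $|p_1|^2 + |p_2|^2 = 1$ such that the maximal singular value of the matrix $C_1 = p_1 A_1 + p_2 B_1$ is strictly greater than $\frac{\sqrt{2}}{2}$. (ii) Let $A_2=\begin{pmatrix} \frac{\sqrt{2}}{2} & 0 \\ 0 & 0 \end{pmatrix}$ and $B_2=\begin{pmatrix} 0 & \frac{\sqrt{2}}{2} \\ z & 0 \end{pmatrix}$, where $z\in\mathbb{C}$ satisfies $0<|z| \leq \frac{\sqrt{2}}{2}$. Then there exist $p_1, p_2\in \mathbb{C} \setminus \{0\}$ satisfying $|p_1|^2 + |p_2|^2 = 1$ such that the maximal singular value of the matrix $C_2= p_1 A_2 + p_2 B_2$ is strictly greater than $\frac{\sqrt{2}}{2}$.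
   Context: All matrices are $2\times 2$ complex matrices; the maximal singular value of a matrix $C$ is the square root of the largest eigenvalue of $C^\dagger C$. *)

(* Defs.v *)
From HB Require Import structures.
From mathcomp Require Import all_boot all_order all_algebra.
From mathcomp Require Import complex.
From mathcomp Require Import reals.
Set Implicit Arguments. Unset Strict Implicit. Unset Printing Implicit Defensive.
Import Order.TTheory GRing.Theory Num.Theory.
Local Open Scope ring_scope.

Definition mx2 (F : Type) (a b c d : F) : 'M[F]_2 :=
  \matrix_(i < 2, j < 2)
    (if (i : nat) == 0%N then (if (j : nat) == 0%N then a else b)
     else (if (j : nat) == 0%N then c else d)).

Definition adjmx (C : numClosedFieldType) (n : nat) (M : 'M[C]_n) : 'M[C]_n :=
  (map_mx Num.conj M)^T.

Definition is_max_singular_value (C : numClosedFieldType) (n : nat)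
    (M : 'M[C]_n) (s : C) : Prop :=
  exists lam : C,
    eigenvalue (adjmx M *m M) lam /\
    (forall mu : C, eigenvalue (adjmx M *m M) mu -> mu <= lam) /\
    s = sqrtC lam.

(* Main.v *)
Require Import Defs.
From HB Require Import structures.
From mathcomp Require Import all_boot all_order all_algebra.
From mathcomp Require Import complex.
From mathcomp Require Import reals.
From mathcomp Require Import ring.
Import Order.TTheory GRing.Theory Num.Theory.
Local Open Scope ring_scope.
Section S.
Variable C : numClosedFieldType.
Lemma key_eig (h00 h01 h10 h11 q : C) : h00 \is Num.real -> h11 \is Num.real ->
  h10 = h01^* -> 0 <= q ->
  q^+2 - (h00+h11)*q + (h00*h11 - h01*h10) < 0 ->
  exists lam, [/\ lam^+2 - (h00+h11)*lam + (h00*h11 - h01*h10) == 0,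
   forall mu, mu^+2 - (h00+h11)*mu + (h00*h11 - h01*h10) == 0 -> mu <= lam & q < lam].
Proof.
move=> r0 r1 e10 q0 hp.
set T := h00 + h11.
set Δ := (h00 - h11)^+2 + 4 * (h01 * h01^*).
have hΔ : 0 <= Δ.
  apply: addr_ge0; last by rewrite mulr_ge0 ?mul_conjC_ge0 ?ler0n.
  by apply: real_exprn_even_ge0 => //; rewrite rpredB.
set δ := sqrtC Δ.
have δ2 : δ^+2 = Δ by rewrite sqrtCK.
have δ0 : 0 <= δ by rewrite sqrtC_ge0.
have fact mu : mu^+2 - T*mu + (h00*h11 - h01*h10) = (mu - (T+δ)/2) * (mu - (T-δ)/2).
  have -> : (mu - (T+δ)/2) * (mu - (T-δ)/2) = mu^+2 - T*mu + (T^+2 - δ^+2)/4.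
    by field.
  rewrite δ2 /Δ /T e10. by field.
have Tr : T \is Num.real by rewrite rpredD.
have lr : (T + δ)/2 \is Num.real.
  by apply: rpredM; [apply: rpredD => //; exact: ger0_real | rewrite rpredV realn].
have dd : (T + δ)/2 - (T - δ)/2 = δ by field.
exists ((T+δ)/2); split.
- by rewrite fact subrr mul0r.
- move=> mu; rewrite fact mulf_eq0 !subr_eq0 => /orP[/eqP->|/eqP->] //.
  by rewrite -subr_ge0 dd.
- rewrite (real_ltNge (ger0_real q0) lr); apply/negP => hle.
  move: hp; rewrite fact; move/lt_geF; rewrite mulr_ge0 //.
    by rewrite subr_ge0.
  have -> : q - (T - δ)/2 = (q - (T+δ)/2) + δ by field.
  by rewrite addr_ge0 // subr_ge0.
Qed.
Lemma adj_entry (M : 'M[C]_2) i j :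
  (adjmx M *m M) i j = (M 0 i)^* * M 0 j + (M 1 i)^* * M 1 j.
Proof.
rewrite !mxE big_ord_recl big_ord1 !mxE.
have -> : lift ord0 ord0 = 1 :> 'I_2 by exact: val_inj.
have -> : ord0 = 0 :> 'I_2 by exact: val_inj.
by [].
Qed.
Lemma det2 (M : 'M[C]_2): \det M = M 0 0 * M 1 1 - M 0 1 * M 1 0.
Proof.
rewrite (expand_det_row _ 0) !big_ord_recl big_ord0 /cofactor !det_mx11 /=.
rewrite !mxE /=.
have -> : lift 0 0 = 1 :> 'I_2 by exact: val_inj.
have -> : lift 1 0 = 0 :> 'I_2 by exact: val_inj.
have -> : ord0 = 0 :> 'I_2 by exact: val_inj.
rewrite !expr0 /= expr1. ring.
Qed.
Lemma eig2 (H : 'M[C]_2) mu : eigenvalue H mu =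
  (mu^+2 - (H 0 0 + H 1 1) * mu + (H 0 0 * H 1 1 - H 0 1 * H 1 0) == 0).
Proof.
transitivity (\det (mu%:M - H) == 0).
  apply/eigenvalueP/det0P=> [[v Av_av v_nz] | [v v_nz Av_av]]; exists v => //.
    by rewrite mulmxBr Av_av mul_mx_scalar subrr.
  by apply/eqP; rewrite -mul_mx_scalar eq_sym -subr_eq0 -mulmxBr Av_av.
rewrite det2 !mxE /=. congr (_ == 0). ring.
Qed.
Lemma sing (M : 'M[C]_2) a : 0 <= a ->
  let h i j := (M 0 i)^* * M 0 j + (M 1 i)^* * M 1 j in
  (a^+2)^+2 - (h 0 0 + h 1 1) * a^+2 + (h 0 0 * h 1 1 - h 0 1 * h 1 0) < 0 ->
  exists s, is_max_singular_value M s /\ a < s.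
Proof.
move=> a0 h hp.
have cg (u : C) : 0 <= u^* * u by rewrite mulrC mul_conjC_ge0.
have r0 : h 0 0 \is Num.real by rewrite ger0_real // addr_ge0.
have r1 : h 1 1 \is Num.real by rewrite ger0_real // addr_ge0.
have e10 : h 1 0 = (h 0 1)^* by rewrite /h rmorphD !rmorphM /= !conjCK; ring.
have [lam [l1 l2 l3]] := @key_eig (h 0 0) (h 0 1) (h 1 0) (h 1 1) (a^+2) r0 r1 e10 (exprn_ge0 2 a0) hp.
exists (sqrtC lam); split.
  exists lam; split; last split => //.
    by rewrite eig2 !adj_entry.
  by move=> mu; rewrite eig2 !adj_entry; exact: l2.
have lam0 : 0 <= lam by apply: le_trans (ltW l3); exact: exprn_ge0.
by rewrite -(sqrCK a0) ltr_sqrtC // nnegrE ?exprn_ge0.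
Qed.
End S.

Lemma part2 (R : realType) (z : R[i]) : 
     0 < `|z| -> `|z| <= sqrtC 2 / 2 ->
     exists p1 p2 : R[i],
       [/\ p1 != 0, p2 != 0, `|p1| ^+ 2 + `|p2| ^+ 2 = 1 &
        exists s : R[i],
          is_max_singular_value
            (p1 *: mx2 (sqrtC 2 / 2) 0 0 0 + p2 *: mx2 0 (sqrtC 2 / 2) z 0) s
          /\ sqrtC 2 / 2 < s].
Proof.
move=> z0 _.
set a : R[i] := sqrtC 2 / 2.
have a0 : 0 <= a by rewrite divr_ge0 ?sqrtC_ge0 ?ler0n.
have ca : a^* = a by rewrite conj_Creal // ger0_real.
have a2 : a^+2 = 1/2 by rewrite /a expr_div_n sqrtCK; field.
have an0 : a != 0.
  by apply/eqP => e; move: a2; rewrite e expr0n /= => /eqP; rewrite eq_sym mul1r invr_eq0 pnatr_eq0.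
clearbody a.
exists a, a; split => //.
  by rewrite ger0_norm // a2; field.
apply: sing => //=.
rewrite /mx2 !mxE /=.
rewrite !(rmorphD, rmorphM) /= ca conjC0.
apply: (@le_lt_trans _ _ ((a^+2)^+2 * (1 - 2 * a^+2) + (a^+2)^+2 * `|z|^+2 * (a^+2 - 1))).
  by rewrite le_eqVlt; apply/orP; left; apply/eqP; rewrite normCKC; ring.
rewrite a2.
have -> : (1 / 2 : R[i]) ^+ 2 * (1 - 2 * (1 / 2)) + (1 / 2) ^+ 2 * `|z| ^+ 2 * (1 / 2 - 1)
   = - (`|z|^+2 / 8) by field.
by rewrite oppr_lt0 divr_gt0 // exprn_gt0.
Qed.

Lemma part1 (R : realType) (x y : R[i]) :
     `|x| <= sqrtC 2 / 2 -> `|y| <= sqrtC 2 / 2 -> ~ (x = 0 /\ y = 0) ->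
     exists p1 p2 : R[i],
       [/\ p1 != 0, p2 != 0, `|p1| ^+ 2 + `|p2| ^+ 2 = 1 &
        exists s : R[i],
          is_max_singular_value
            (p1 *: mx2 (sqrtC 2 / 2) 0 0 (sqrtC 2 / 2) + p2 *: mx2 0 x y 0) s
          /\ sqrtC 2 / 2 < s].
Proof.
move=> hx hy nxy.
set a : R[i] := sqrtC 2 / 2 in hx hy *.
have a0 : 0 <= a by rewrite divr_ge0 ?sqrtC_ge0 ?ler0n.
have ca : a^* = a by rewrite conj_Creal // ger0_real.
have a2 : a^+2 = 1/2 by rewrite /a expr_div_n sqrtCK; field.
clearbody a.
have xx : x * x^* = `|x|^+2 by rewrite normCK.
have yy : y * y^* = `|y|^+2 by rewrite normCK.
have nxy' : `|x * y| = `|x| * `|y| by rewrite normrM.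
set s := `|x| in hx xx nxy' *.
set t := `|y| in hy yy nxy' *.
have s0 : 0 <= s by rewrite normr_ge0.
have t0 : 0 <= t by rewrite normr_ge0.
have st0 : 0 < s + t.
  rewrite lt_def addr_ge0 // andbT paddr_eq0 // !normr_eq0.
  by apply/negP => /andP[/eqP ? /eqP ?]; apply: nxy.
set v : R[i] := if x * y == 0 then 1 else (x*y)^* / `|x*y|.
have nv : `|v| = 1.
  rewrite /v; case: eqP => [_|/eqP h]; first by rewrite normr1.
  by rewrite normf_div norm_conjC normr_id divff // normr_eq0.
have vxy : v * (x * y) = s * t.
  rewrite /v; case: eqP => [h|/eqP h]; first by rewrite h mulr0 -nxy' h normr0.
  rewrite -nxy' mulrAC (mulrC _ (x*y)) -normCK.
  by rewrite expr2 mulrK // unitfE normr_eq0.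
clearbody v.
set r : R[i] := (s + t) / 2.
have r0 : 0 < r by rewrite divr_gt0.
have rr : r \is Num.real by rewrite ger0_real // ltW.
have ra : r <= a.
  have : 0 <= ((a - s) + (a - t))/2 by rewrite divr_ge0 // addr_ge0 // subr_ge0.
  have -> : ((a - s) + (a - t))/2 = a - r by rewrite /r; field.
  by rewrite subr_ge0.
have r2 : r^+2 <= 1/2.
  have : 0 <= (a - r) * (a + r) by rewrite mulr_ge0 // ?subr_ge0 // addr_ge0 // ltW.
  have -> : (a - r) * (a + r) = a^+2 - r^+2 by ring.
  by rewrite a2 subr_ge0.
have hc : 0 < 1 - r^+2.
  apply: lt_le_trans (_ : 1/2 <= _); first by rewrite divr_gt0 ?ltr01 ?ltr0n.
  have -> : 1 - r^+2 = 1/2 + (1/2 - r^+2) by field.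
  by rewrite lerDl subr_ge0.
set c : R[i] := sqrtC (1 - r^+2).
have c2 : c^+2 = 1 - r^+2 by rewrite sqrtCK.
have c0 : 0 <= c by rewrite sqrtC_ge0 ltW.
have cc : c^* = c by rewrite conj_Creal // ger0_real.
have cn0 : c != 0 by rewrite sqrtC_eq0 gt_eqF.
clearbody c.
set u : R[i] := sqrtC v.
have u2 : u^+2 = v by rewrite sqrtCK.
have uu : u * u^* = 1 by rewrite -normCK -normrX u2 nv.
have un0 : u != 0.
  by apply/eqP => e; move: uu; rewrite e mul0r => /eqP; rewrite eq_sym oner_eq0.
clearbody u.
set w : R[i] := r * u.
have ww : w * w^* = r^+2.
  rewrite rmorphM /= (conj_Creal rr).
  have -> : r * u * (r * u^*) = r^+2 * (u * u^*) by ring.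
  by rewrite uu mulr1.
have wxy : w^+2 * (x * y) = r^+2 * (s * t) by rewrite exprMn u2 -mulrA vxy.
have wn0 : w != 0 by rewrite mulf_neq0 // gt_eqF.
clearbody w.
have wxy' : w^*^+2 * (x^* * y^*) = r^+2 * (s * t).
  have e := congr1 (@Num.conj _) wxy.
  have rl : r^+2 * (s * t) \is Num.real by apply: rpredM; [exact: rpredX | apply: ger0_real; exact: mulr_ge0].
  rewrite (conj_Creal rl) !rmorphM /= in e; rewrite -e; ring.
exists c, w; split => //.
  by rewrite ger0_norm // normCK ww c2 subrK.
apply: sing => //=.
rewrite /mx2 !mxE /= !(rmorphD, rmorphM) /= ca cc conjC0.
apply: (@le_lt_trans _ _ ((a^+2)^+2 - a^+2 * (2 * c^+2 * a^+2 + (w*w^*) * ((x*x^*) + (y*y^*)))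
   + (c^+2)^+2 * (a^+2)^+2 + (w*w^*)^+2 * (x*x^*) * (y*y^*)
   - c^+2 * a^+2 * (w^+2 * (x*y) + w^*^+2 * (x^* * y^*)))).
  by rewrite le_eqVlt; apply/orP; left; apply/eqP; ring.
rewrite ww wxy wxy' xx yy a2 c2.
have -> : (1 / 2) ^+ 2 - 1 / 2 * (2 * (1 - r ^+ 2) * (1 / 2) + r ^+ 2 * (s ^+ 2 + t ^+ 2)) +
    (1 - r ^+ 2) ^+ 2 * (1 / 2) ^+ 2 + (r ^+ 2) ^+ 2 * s ^+ 2 * t ^+ 2 -
    (1 - r ^+ 2) * (1 / 2) * (r ^+ 2 * (s * t) + r ^+ 2 * (s * t))
  = (s + t)^+4 / 16 * ((1/2 + s * t)^+2 - 2) by rewrite /r; field.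
rewrite pmulr_rlt0 ?divr_gt0 ?exprn_gt0 ?ltr0n // subr_lt0.
have hst : s * t <= 1/2 by rewrite -a2 expr2 ler_pM.
apply: le_lt_trans (_ : 1 < 2); last by rewrite ltr1n.
apply: exprn_ile1; first by apply: addr_ge0; [rewrite divr_ge0 ?ler01 ?ler0n | exact: mulr_ge0].
have h1 : (1/2 + 1/2 : R[i]) = 1 by field.
by rewrite -[X in _ <= X]h1 lerD2l.
Qed.

Theorem lemma10 (R : realType) :
  (* (i) *)
  (forall x y : R[i],
     `|x| <= sqrtC 2 / 2 -> `|y| <= sqrtC 2 / 2 -> ~ (x = 0 /\ y = 0) ->
     exists p1 p2 : R[i],
       [/\ p1 != 0, p2 != 0, `|p1| ^+ 2 + `|p2| ^+ 2 = 1 &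
        exists s : R[i],
          is_max_singular_value
            (p1 *: mx2 (sqrtC 2 / 2) 0 0 (sqrtC 2 / 2) + p2 *: mx2 0 x y 0) s
          /\ sqrtC 2 / 2 < s]) /\
  (* (ii) *)
  (forall z : R[i],
     0 < `|z| -> `|z| <= sqrtC 2 / 2 ->
     exists p1 p2 : R[i],
       [/\ p1 != 0, p2 != 0, `|p1| ^+ 2 + `|p2| ^+ 2 = 1 &
        exists s : R[i],
          is_max_singular_value
            (p1 *: mx2 (sqrtC 2 / 2) 0 0 0 + p2 *: mx2 0 (sqrtC 2 / 2) z 0) s
          /\ sqrtC 2 / 2 < s]).
Proof.
split; [exact: part1 | exact: part2].
Qed.
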